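(* Let $K^T \ge 2$, let $\mathcal{D}^T$ be a probability distribution over pairs $(x,y)$ with $x$ in an input space $\mathcal{X}^T$ and $y$ a one-hot vector in $\{0,1\}^{K^T}$, and let $\ell(z,y) = -\sum_{j=1}^{K^T} y_j \log p_j(z)$ be the cross-entropy loss with softmax $p_j(z) = e^{z_j}/\sum_i e^{z_i}$. Let $z_S, z_L : \mathcal{X}^T \to \mathbb{R}^{K^T}$ be measurable logit maps of a service model and a local model before reprogramming, and $z^*_S(\cdot,\mathbf{Q}^* ), z^*_L(\cdot,\mathbf{P}^* ) : \mathcal{X}^T \to \mathbb{R}^{K^T}$ measurable logit maps of the two models after visual reprogramming with fixed prompts $\mathbf{Q}^*$, $\mathbf{P}^*$ respectively. Define the (finite) risks $\mathcal{R}_L(\mathcal{D}^T) = \mathbb{E}_{(x,y)\sim\mathcal{D}^T}[\ell(z_L(x),y)]$, $\mathcal{R}_S(\mathcal{D}^T) = \mathbb{E}[\ell(z_S(x),y)]$, $\mathcal{R}_L(\mathcal{D}^T,\mathbf{P}^* ) = \mathbb{E}[\ell(z^*_L(x,\mathbf{P}^* ),y)]$, $\mathcal{R}_S(\mathcal{D}^T,\mathbf{Q}^* ) = \mathbb{E}[\ell(z^*_S(x,\mathbf{Q}^* ),y)]$. Assume: (a) (service model superiority) $\mathcal{R}_S(\mathcal{D}^T) \le \mathcal{R}_L(\mathcal{D}^T)$ and $\mathcal{R}_S(\mathcal{D}^T,\mathbf{Q}^* ) \le \mathcal{R}_L(\mathcal{D}^T,\mathbf{P}^* )$; (b) ($\epsilon$-faithful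 priming) for some $\epsilon \ge 0$, $\mathbb{E}_{(x,y)\sim\mathcal{D}^T}[\|z_S(x) - z_L(x)\|_1] \le \epsilon$ and $\mathbb{E}_{(x,y)\sim\mathcal{D}^T}[\|z^*_S(x,\mathbf{Q}^* ) - z^*_L(x,\mathbf{P}^* )\|_1] \le \epsilon$. Then (1) $\mathcal{R}_L(\mathcal{D}^T) - \epsilon \le \mathcal{R}_S(\mathcal{D}^T) \le \mathcal{R}_L(\mathcal{D}^T)$, and (2) $\mathcal{R}_L(\mathcal{D}^T,\mathbf{P}^* ) - \epsilon \le \mathcal{R}_S(\mathcal{D}^T,\mathbf{Q}^* ) \le \mathcal{R}_L(\mathcal{D}^T,\mathbf{P}^* )$.
   Context: In the paper's setting, $z^*_S(x,\mathbf{Q}^* ) = \mathcal{F}_S(g_{\mathrm{in}}(x,\mathbf{Q}^* ))$ and $z^*_L(x,\mathbf{P}^* ) = \mathcal{F}_L(g_{\mathrm{in}}(x,\mathbf{P}^* ))$, where $g_{\mathrm{in}}$ is an input transformation and $\mathbf{Q}^*$, $\mathbf{P}^*$ are optimal visual prompts for the service model $\mathcal{F}_S$ and primed local model $\mathcal{F}_L$; for the statement these are simply fixed. $\|\cdot\|_1$ is the $L_1$ norm on $\mathbb{R}^{K^T}$. *)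

(* Defs.v *)
From HB Require Import structures.
From mathcomp Require Import all_boot all_order all_algebra.
From mathcomp Require Import all_classical all_reals all_analysis.
Set Implicit Arguments. Unset Strict Implicit. Unset Printing Implicit Defensive.
Import Order.TTheory GRing.Theory Num.Theory.
Local Open Scope ring_scope.

Definition softmax (R : realType) (K : nat) (z : 'I_K -> R) (j : 'I_K) : R :=
  expR (z j) / \sum_(i < K) expR (z i).

Definition xent (R : realType) (K : nat) (z y : 'I_K -> R) : R :=
  - \sum_(j < K) y j * ln (softmax z j).

Definition l1dist (R : realType) (K : nat) (z z' : 'I_K -> R) : R :=
  \sum_(j < K) `|z j - z' j|.

Definition onehot (R : realType) (K : nat) (y : 'I_K -> R) : Prop :=
  exists c : 'I_K, forall j, y j = (j == c)%:R.

(* Main.v *)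
Require Import Defs.
From HB Require Import structures.
From mathcomp Require Import all_boot all_order all_algebra.
From mathcomp Require Import all_classical all_reals all_analysis.
From mathcomp Require Import lra.
Import Order.TTheory GRing.Theory Num.Theory.
Local Open Scope ring_scope.
Lemma two_le (R : realType) K (f : 'I_K -> R) i c : i != c ->
  (forall j, 0 <= f j) -> f i + f c <= \sum_j f j.
Proof.
move=> ic f0; rewrite (bigD1 i) //= (bigD1 c) /=; last by rewrite eq_sym ic.
rewrite addrA lerDl; apply: sumr_ge0 => j _; exact: f0.
Qed.

Lemma xent_onehot (R : realType) K (z y : 'I_K -> R) c :
  (forall j, y j = (j == c)%:R) ->
  xent z y = ln (\sum_(i < K) expR (z i)) - z c.
Proof.
move=> hy; rewrite /xent (bigD1 c) //= big1 => [|j jc]; last by rewrite hy (negbTE jc) mul0r.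
have S0 : 0 < \sum_(i < K) expR (z i).
  by rewrite (bigD1 c) //= ltr_pwDl ?expR_gt0 // sumr_ge0 // => i _; rewrite ltW ?expR_gt0.
rewrite hy eqxx mul1r addr0 /softmax ln_div ?posrE ?expR_gt0 // expRK.
by rewrite opprB.
Qed.

Lemma key (R : realType) K (z z' y : 'I_K -> R) : onehot y ->
  xent z' y - xent z y <= l1dist z z'.
Proof.
case=> c hy; rewrite (@xent_onehot R K z y c hy) (@xent_onehot R K z' y c hy).
set M := (z' c - z c) + l1dist z z'.
have hM : forall i, z' i - z i <= M.
  move=> i; rewrite /M -lerBlDl.
  have [->|ic] := eqVneq i c; first by rewrite subrr /l1dist sumr_ge0.
  apply: le_trans (@two_le R K (fun j => `|z j - z' j|) i c ic _) => //.
  rewrite distrC [`|z c - _|]distrC.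
  apply: le_trans (ler_norm _) _.
  have -> : z' i - z i - (z' c - z c) = (z' i - z i) - (z' c - z c) by [].
  apply: le_trans (ler_normB _ _) _.
  by rewrite distrC [`|z' c - _|]distrC.
have S0 : forall w : 'I_K -> R, 0 < \sum_(i < K) expR (w i).
  by move=> w; rewrite (bigD1 c) //= ltr_pwDl ?expR_gt0 // sumr_ge0 // => i _; rewrite ltW ?expR_gt0.
have : ln (\sum_(i < K) expR (z' i)) <= ln (\sum_(i < K) expR (z i)) + M.
  rewrite -[M in _ + M]expRK -lnM ?posrE ?expR_gt0 ?S0 //.
  rewrite ler_ln ?posrE ?mulr_gt0 ?expR_gt0 ?S0 // mulr_suml.
  apply: ler_sum => i _; rewrite -expRD ler_expR -lerBlDl; exact: hM.
rewrite /M => h; lra.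
Qed.
Local Open Scope ereal_scope.

Lemma step d (T : measurableType d) (R : realType) (P : probability T R)
  (f g h : T -> R) (eps : R) :
  P.-integrable setT (fun w => (f w)%:E) -> P.-integrable setT (fun w => (g w)%:E) ->
  measurable_fun setT h -> (forall w, (0 <= h w)%R) -> (forall w, (g w - f w <= h w)%R) ->
  \int[P]_w (h w)%:E <= eps%:E ->
  \int[P]_w (g w)%:E - eps%:E <= \int[P]_w (f w)%:E.
Proof.
move=> fi gi mh h0 hgf hb.
have hi : P.-integrable setT (fun w => (h w)%:E).
  apply/integrableP; split; first exact/measurable_realfun.measurable_EFinP.
  under eq_integral do rewrite gee0_abs ?lee_fin //.
  by apply: le_lt_trans hb _; rewrite ltry.
have : \int[P]_w (g w)%:E <= \int[P]_w ((f w)%:E + (h w)%:E).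
  apply: le_integral => //; first exact: integrableD.
  by move=> w _; rewrite -EFinD lee_fin -lerBlDl.
rewrite integralD // => H.
rewrite leeBlDr //.
apply: le_trans H _; exact: leeD2l.
Qed.

Lemma l1_meas d (T : measurableType d) (R : realType) K (f g : T -> 'I_K -> R) :
  (forall j, measurable_fun setT (fun w => f w j)) ->
  (forall j, measurable_fun setT (fun w => g w j)) ->
  measurable_fun setT (fun w => l1dist (f w) (g w)).
Proof.
move=> mf mg; rewrite /l1dist.
elim: (index_enum _) => [|j s ih].
  under eq_fun do rewrite big_nil. exact: measurable_cst.
under eq_fun do rewrite big_cons.
apply: measurable_realfun.measurable_funD => //.
apply: measurableT_comp; first exact: measurable_realfun.normr_measurable.
exact: measurable_realfun.measurable_funB.
Qed.

Theorem theorem1 (R : realType) (K : nat) (hK : (2 <= K)%N)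
  (dO : measure_display) (Omega : measurableType dO) (P : probability Omega R)
  (dX : measure_display) (X : measurableType dX)
  (xr : Omega -> X) (yr : Omega -> 'I_K -> R)
  (mxr : measurable_fun setT xr)
  (myr : forall j, measurable_fun setT (fun w => yr w j))
  (honehot : forall w, onehot (yr w))
  (zS zL : X -> 'I_K -> R)
  (Qt Pt : Type) (zSr : X -> Qt -> 'I_K -> R) (zLr : X -> Pt -> 'I_K -> R)
  (Qs : Qt) (Ps : Pt)
  (mzS : forall j, measurable_fun setT (fun x => zS x j))
  (mzL : forall j, measurable_fun setT (fun x => zL x j))
  (mzSr : forall j, measurable_fun setT (fun x => zSr x Qs j))
  (mzLr : forall j, measurable_fun setT (fun x => zLr x Ps j))
  (iS : P.-integrable setT (fun w => (xent (zS (xr w)) (yr w))%:E))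
  (iL : P.-integrable setT (fun w => (xent (zL (xr w)) (yr w))%:E))
  (iSr : P.-integrable setT (fun w => (xent (zSr (xr w) Qs) (yr w))%:E))
  (iLr : P.-integrable setT (fun w => (xent (zLr (xr w) Ps) (yr w))%:E))
  (eps : R) (heps : (0 <= eps)%R)
  (ha1 : \int[P]_w (xent (zS (xr w)) (yr w))%:E
           <= \int[P]_w (xent (zL (xr w)) (yr w))%:E)
  (ha2 : \int[P]_w (xent (zSr (xr w) Qs) (yr w))%:E
           <= \int[P]_w (xent (zLr (xr w) Ps) (yr w))%:E)
  (hb1 : \int[P]_w (l1dist (zS (xr w)) (zL (xr w)))%:E <= eps%:E)
  (hb2 : \int[P]_w (l1dist (zSr (xr w) Qs) (zLr (xr w) Ps))%:E <= eps%:E) :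
  (\int[P]_w (xent (zL (xr w)) (yr w))%:E - eps%:E
     <= \int[P]_w (xent (zS (xr w)) (yr w))%:E
   /\ \int[P]_w (xent (zS (xr w)) (yr w))%:E
     <= \int[P]_w (xent (zL (xr w)) (yr w))%:E)
  /\
  (\int[P]_w (xent (zLr (xr w) Ps) (yr w))%:E - eps%:E
     <= \int[P]_w (xent (zSr (xr w) Qs) (yr w))%:E
   /\ \int[P]_w (xent (zSr (xr w) Qs) (yr w))%:E
     <= \int[P]_w (xent (zLr (xr w) Ps) (yr w))%:E).
Proof.
have mc : forall (zz : X -> 'I_K -> R), (forall j, measurable_fun setT (fun x => zz x j)) ->
  forall j, measurable_fun setT (fun w => zz (xr w) j).
  by move=> zz hz j; exact: (measurableT_comp (hz j) mxr).
split; split; [|exact: ha1| |exact: ha2].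
- apply: (@step _ _ R P _ _ (fun w => l1dist (zS (xr w)) (zL (xr w))) eps iS iL _ _ _ hb1).
  + by apply: l1_meas; apply: mc.
  + by move=> w; rewrite /l1dist sumr_ge0.
  + by move=> w; apply: key.
- apply: (@step _ _ R P _ _ (fun w => l1dist (zSr (xr w) Qs) (zLr (xr w) Ps)) eps iSr iLr _ _ _ hb2).
  + apply: l1_meas; [exact: (mc (fun x => zSr x Qs))|exact: (mc (fun x => zLr x Ps))].
  + by move=> w; rewrite /l1dist sumr_ge0.
  + by move=> w; apply: key.
Qed.
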